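(* Let $i\ge1$ and consider a solution $x\in\mathbb{N}^n$ with $\|x\|_1\le 2^i$. Then there is a partition of $x$ into two solutions $x_1,x_2\in\mathbb{N}^n$ such that: (1) $\|x_1\|_1,\|x_2\|_1\le 2^{i-1}$ and $x=x_1+x_2$; (2) $|w(x_1)-\tfrac12 w(x)|\le 2\Delta$ and $|w(x_2)-\tfrac12 w(x)|\le 2\Delta$; (3) $|p(x_1)-\tfrac12 p(x)|\le 2\Delta$ and $|p(x_2)-\tfrac12 p(x)|\le 2\Delta$.
   Context: Fix items $(p_1,w_1),\dots,(p_n,w_n)$ with $p_k,w_k\in\mathbb{N}$. For $x\in\mathbb{N}^n$ (a multiset of items), $p(x)=\sum_k p_kx_k$, $w(x)=\sum_k w_kx_k$, $\|x\|_1=\sum_k x_k$. Let $p_{\max}=\max_k p_k$, $w_{\max}=\max_k w_k$ and $\Delta:=p_{\max}+w_{\max}$. *)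

(* Defs.v *)
From mathcomp Require Import all_boot all_order all_algebra.
Set Implicit Arguments. Unset Strict Implicit. Unset Printing Implicit Defensive.

(* Items (p_k, w_k), k < n, given as functions 'I_n -> nat.
   Multisets of items x : 'I_n -> nat. *)
Definition val_of (n : nat) (c : 'I_n -> nat) (x : 'I_n -> nat) : nat :=
  \sum_(k < n) c k * x k.

Definition norm1 (n : nat) (x : 'I_n -> nat) : nat := \sum_(k < n) x k.

Definition cmax (n : nat) (c : 'I_n -> nat) : nat := \max_(k < n) c k.

Definition Delta (n : nat) (p w : 'I_n -> nat) : nat := cmax p + cmax w.

(* Main.v *)
Require Import Defs.
From mathcomp Require Import all_boot all_order all_algebra.
From mathcomp Require Import lra zify.
Set Implicit Arguments. Unset Strict Implicit. Unset Printing Implicit Defensive.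
Import Order.TTheory GRing.Theory Num.Theory.
Local Open Scope ring_scope.

Definition sm (n : nat) (c : 'I_n -> nat) (l : seq 'I_n) : rat :=
  (\sum_(a <- l) c a)%N%:R.

Lemma sm_cons n (c : 'I_n -> nat) a l : sm c (a :: l) = (c a)%:R + sm c l.
Proof. by rewrite /sm big_cons natrD. Qed.

Lemma sm_nil n (c : 'I_n -> nat) : sm c [::] = 0.
Proof. by rewrite /sm big_nil. Qed.

Lemma cnt_aux (T : Type) (q : pred T) a b (r r1 r2 : seq T) :
  count q r = (count q r1 + count q r2)%N ->
  count q (a :: b :: r) = count q ((a :: r1) ++ (b :: r2)) /\
  count q (a :: b :: r) = count q ((b :: r1) ++ (a :: r2)).
Proof.
rewrite /= !count_cat /= => ->.
move: (nat_of_bool (q a)) (nat_of_bool (q b)) (count q r1) (count q r2) => x1 x2 x3 x4.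
split; lia.
Qed.

Lemma split_list n (p w : 'I_n -> nat) (P W : nat) :
  (forall a, p a <= P)%N -> (forall a, w a <= W)%N ->
  forall (l : seq 'I_n) (c : nat),
  sorted (fun a b => p a <= p b)%N l -> (c <= P)%N ->
  (forall a, a \in l -> c <= p a)%N ->
  exists l1 l2, perm_eq l (l1 ++ l2) /\
    (size l1 + size l2 = size l)%N /\ (size l2 <= size l1 <= (size l2).+1)%N /\
    (- (W%:R) <= sm w l1 - sm w l2 <= W%:R) /\
    (- (2 * P%:R - c%:R) <= sm p l1 - sm p l2 <= 2 * P%:R - c%:R).
Proof.
move=> hP hW.
have W0 : (0:rat) <= W%:R by [].
have P0 : (0:rat) <= P%:R by [].
suff H : forall N l c, (size l <= N)%N ->
  sorted (fun a b => p a <= p b)%N l -> (c <= P)%N ->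
  (forall a, a \in l -> c <= p a)%N ->
  exists l1 l2, perm_eq l (l1 ++ l2) /\
    (size l1 + size l2 = size l)%N /\ (size l2 <= size l1 <= (size l2).+1)%N /\
    (- (W%:R) <= sm w l1 - sm w l2 <= W%:R) /\
    (- (2 * P%:R - c%:R) <= sm p l1 - sm p l2 <= 2 * P%:R - c%:R).
  by move=> l c; apply: (H (size l)).
elim=> [|N IH] [|a [|b r]] c //=.
- move=> _ _ cP _; exists [::], [::]; rewrite !sm_nil.
  have : (c%:R : rat) <= P%:R by rewrite ler_nat.
  split=> //; split=> //; split=> //; split; apply/andP; split; lra.
- move=> _ _ cP _; exists [::], [::]; rewrite !sm_nil.
  have : (c%:R : rat) <= P%:R by rewrite ler_nat.
  split=> //; split=> //; split=> //; split; apply/andP; split; lra.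
- move=> _ _ cP ca; exists [:: a], [::]; rewrite !sm_cons !sm_nil.
  have h1 : (c%:R : rat) <= (p a)%:R by rewrite ler_nat ca // mem_head.
  have h2 : ((p a)%:R : rat) <= P%:R by rewrite ler_nat.
  have h3 : ((w a)%:R : rat) <= W%:R by rewrite ler_nat.
  have h4 : (0 : rat) <= (w a)%:R by [].
  split=> //; split=> //; split=> //; split; apply/andP; split; lra.
- move=> sz /andP [ab pr] cP ca.
  have sr : sorted (fun a b => p a <= p b)%N r := path_sorted pr.
  have mr : all (fun y => p b <= p y)%N r.
    by apply: order_path_min pr => x y z; apply: leq_trans.
  have [r1 [r2 [pe [s1 [s2 [hw hp]]]]]] := IH r (p b) (ltnW sz) sr (hP b)
     (fun y (hy : y \in r) => (allP mr) y hy).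
  have h1 : (c%:R : rat) <= (p a)%:R by rewrite ler_nat ca // mem_head.
  have h2 : ((p b)%:R : rat) <= P%:R by rewrite ler_nat.
  have h5 : ((p a)%:R : rat) <= (p b)%:R by rewrite ler_nat.
  have h3 : ((w a)%:R : rat) <= W%:R by rewrite ler_nat.
  have h3' : ((w b)%:R : rat) <= W%:R by rewrite ler_nat.
  have h4 : (0 : rat) <= (w a)%:R by [].
  have h4' : (0 : rat) <= (w b)%:R by [].
  move: hw hp => /andP [hw1 hw2] /andP [hp1 hp2].
  have pab : forall u v, (u == a) && (v == b) || (u == b) && (v == a) ->
     perm_eq [:: a, b & r] ((u :: r1) ++ (v :: r2)).
    move=> u v /orP [] /andP [/eqP -> /eqP ->]; apply/permP => q;
    move/permP: pe => /(_ q); rewrite count_cat => H; case: (cnt_aux a b H) => e1 e2;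
    first [exact e1 | exact e2].
  move: s2 => /andP [s2 s3].
  have [hr|hr] := lerP 0 (sm w r1 - sm w r2);
  have [hab|hab] := leqP (w a) (w b).
  + exists (a :: r1), (b :: r2); rewrite !sm_cons; split; first by apply: pab; rewrite !eqxx.
    move: hab; rewrite -(ler_nat rat) => hab.
    split; first by rewrite /= -s1 addnS addSn.
    split; first by rewrite /= !ltnS s2 s3.
    split; apply/andP; split; lra.
  + exists (b :: r1), (a :: r2); rewrite !sm_cons; split; first by apply: pab; rewrite !eqxx orbT.
    move: hab; rewrite -(ltr_nat rat) => hab.
    split; first by rewrite /= -s1 addnS addSn.
    split; first by rewrite /= !ltnS s2 s3.
    split; apply/andP; split; lra.
  + exists (b :: r1), (a :: r2); rewrite !sm_cons; split; first by apply: pab; rewrite !eqxx orbT.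
    move: hab; rewrite -(ler_nat rat) => hab.
    split; first by rewrite /= -s1 addnS addSn.
    split; first by rewrite /= !ltnS s2 s3.
    split; apply/andP; split; lra.
  + exists (a :: r1), (b :: r2); rewrite !sm_cons; split; first by apply: pab; rewrite !eqxx.
    move: hab; rewrite -(ltr_nat rat) => hab.
    split; first by rewrite /= -s1 addnS addSn.
    split; first by rewrite /= !ltnS s2 s3.
    split; apply/andP; split; lra.
Qed.

Lemma sum_count n (c : 'I_n -> nat) (l : seq 'I_n) :
  (\sum_(k < n) c k * count_mem k l)%N = (\sum_(a <- l) c a)%N.
Proof.
elim: l => [|a l IH]; first by rewrite big_nil big1 // => k _; rewrite muln0.
rewrite big_cons -IH /=.
under eq_bigr => k _ do rewrite mulnDr.
rewrite big_split /=; congr (_ + _)%N.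
rewrite (bigD1 a) //= eqxx muln1 big1 ?addn0 // => k /negbTE.
by rewrite eq_sym => ->; rewrite muln0.
Qed.

Lemma cnt_flat n (x : 'I_n -> nat) k :
  count_mem k (flatten [seq nseq (x j) j | j <- enum 'I_n]) = x k.
Proof.
rewrite count_flatten -map_comp.
rewrite sumnE big_map big_enum /=.
rewrite (bigD1 k) //= count_nseq /= eqxx mul1n big1 ?addn0 // => j /negbTE.
by rewrite count_nseq /= eq_sym => ->.
Qed.

Lemma arith (s1 s2 m K : nat) : (s1 + s2 = m)%N -> (s2 <= s1 <= s2.+1)%N ->
  (m <= 2 * K)%N -> (s1 <= K)%N /\ (s2 <= K)%N.
Proof. move=> h /andP [h1 h2] h3; split; lia. Qed.

Theorem lemma3p3 (n : nat) (p w : 'I_n -> nat) (i : nat) (x : 'I_n -> nat) :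
  (1 <= i)%N -> (norm1 x <= 2 ^ i)%N ->
  exists x1 x2 : 'I_n -> nat,
    ((norm1 x1 <= 2 ^ i.-1)%N /\ (norm1 x2 <= 2 ^ i.-1)%N /\
      (forall k, x k = (x1 k + x2 k)%N)) /\
    (`|(val_of w x1)%:R - (val_of w x)%:R / 2| <= 2 * (Delta p w)%:R :> rat /\
     `|(val_of w x2)%:R - (val_of w x)%:R / 2| <= 2 * (Delta p w)%:R :> rat) /\
    (`|(val_of p x1)%:R - (val_of p x)%:R / 2| <= 2 * (Delta p w)%:R :> rat /\
     `|(val_of p x2)%:R - (val_of p x)%:R / 2| <= 2 * (Delta p w)%:R :> rat).
Proof.
move=> i1 hx.
pose le := fun a b : 'I_n => (p a <= p b)%N.
pose l := sort le (flatten [seq nseq (x j) j | j <- enum 'I_n]).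
have cnt : forall k, count_mem k l = x k.
  have ps : perm_eq l (flatten [seq nseq (x j) j | j <- enum 'I_n]) by rewrite /l perm_sort.
  by move=> k; rewrite (permP ps) cnt_flat.
have vl : forall c : 'I_n -> nat, val_of c x = (\sum_(a <- l) c a)%N.
  by move=> c; rewrite /val_of -sum_count; apply: eq_bigr => k _; rewrite cnt.
have sl : size l = norm1 x.
  rewrite /norm1 -sum1_size -sum_count; apply: eq_bigr => k _; by rewrite cnt mul1n.
have hP : forall a, (p a <= cmax p)%N by move=> a; apply: leq_bigmax.
have hW : forall a, (w a <= cmax w)%N by move=> a; apply: leq_bigmax.
have srt : sorted le l by apply: sort_sorted => a b; apply: leq_total.
have [l1 [l2 [pe [s1 [s2 [hw hp]]]]]] :=
  split_list hP hW srt (leq0n _) (fun a _ => leq0n _).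
exists (fun k => count_mem k l1), (fun k => count_mem k l2).
have n1 : forall l' : seq 'I_n, norm1 (fun k => count_mem k l') = size l'.
  move=> l'; rewrite /norm1 -sum1_size -sum_count; apply: eq_bigr => k _; by rewrite mul1n.
have v1 : forall (c : 'I_n -> nat) (l' : seq 'I_n),
   (val_of c (fun k => count_mem k l'))%:R = sm c l'.
  by move=> c l'; rewrite /val_of sum_count.
have vx : forall c : 'I_n -> nat, (val_of c x)%:R = sm c l1 + sm c l2.
  by move=> c; rewrite vl (perm_big _ pe) big_cat natrD.
have e2 : (2 ^ i = 2 * 2 ^ i.-1)%N by clear -i1; case: i i1 => // i0 _; rewrite expnS.
have [b1 b2] := arith s1 s2 (leq_trans (leq_trans (eq_leq sl) hx) (eq_leq e2)).
split; first by rewrite !n1; split=> //; split=> // k; rewrite -cnt (permP pe) count_cat.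
rewrite !v1 !vx /Delta natrD.
move: hw hp => /andP [hw1 hw2] /andP [hp1 hp2].
have P0 : (0 : rat) <= (cmax p)%:R by [].
have W0 : (0 : rat) <= (cmax w)%:R by [].
rewrite subr0 in hp1 hp2.
by split; split; rewrite ler_norml; apply/andP; split; lra.
Qed.
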